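(* Let $A_*,R_*,\gamma>0$, let $r_k=R_*k^\gamma$, let $a_{1,1}=A_*$ and $a_{k,\ell}=0$ for $(k,\ell)\neq(1,1)$, and let $s_k\ge0$ satisfy: for every $\mu\ge0$, $\sum_k k^\mu s_k<\infty$, with $\mathfrak s_1:=\sum_k ks_k$. Consider the system $\frac{d}{dt}c_1=-A_*c_1^2+s_1-r_1c_1$, $\frac{d}{dt}c_2=\frac{A_*}{2}c_1^2+s_2-r_2c_2$, $\frac{d}{dt}c_k=s_k-r_kc_k$ $(k\ge3)$. Then: (1) Its unique nonnegative equilibrium is $$Q_1=\tfrac12\sqrt{\tfrac{r_1^2}{A_*^2}+\tfrac{4s_1}{A_*}}-\tfrac{r_1}{2A_*},\qquad Q_2=\tfrac{A_*}{2r_2}Q_1^2+\tfrac{s_2}{r_2},\qquad Q_k=\tfrac{s_k}{r_k}\ (k\ge3).$$ (2) For every nonnegative initial datum $c^{\mathrm{in}}$ with $\sum_k kc^{\mathrm{in}}_k<\infty$ and every $\mu\ge1$, the solution satisfies $\sum_{k\ge1}k^\mu|c_k(t)-Q_k|\le Ke^{-\kappa t}$ for all $t\ge1$, with $\kappa=\min\{\frac{A_*}{2\alpha},\frac{r_2}{2},\frac{3^\gamma}{2}R_*\}$, where $\alpha=(r_1^2/A_*^2+4s_1/A_* )^{-1/2}$, and $K$ a constant depending on $c^{\mathrm{in}}$, $\mu$ and the coefficients. (3) If moreover $A_*s_1\ge4R_*^2$, then for every $\mu\ge1$, every $\beta\in[0,1]$ and every nonnegative sequence $c$ (for which the sum converges),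 $2A_*(C_\mu+2)\sum_{\ell\ge1}\ell^{\mu+\beta}(c_\ell+Q_\ell)-R_*\ge(3(C_\mu+2)-1)R_*>0$, where $C_\mu=2^{\max\{\mu-2,0\}}\max\{\mu,\mu(\mu-1)\}$.
   Context: $\mathbb N=\{1,2,\dots\}$. Solutions of the system are understood as nonnegative classical solutions on $[0,\infty)$ with $c_k(0)=c_k^{\mathrm{in}}$. *)

(* Defs.v *)
From Stdlib Require Import Reals Lra.
Open Scope R_scope.

(* k^x for real x, k : nat (k >= 1 where used) *)
Definition npow (k : nat) (x : R) : R := Rpower (INR k) x.

(* psum f N = sum_{k=1}^{N} f k *)
Fixpoint psum (f : nat -> R) (N : nat) : R :=
  match N with
  | O => 0
  | S n => psum f n + f (S n)
  end.

Definition series_to (f : nat -> R) (l : R) : Prop := Un_cv (psum f) l.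

Definition rk (Rs gamma : R) (k : nat) : R := Rs * npow k gamma.

Definition rhs (A Rs gamma : R) (s : nat -> R) (c : nat -> R) (k : nat) : R :=
  match k with
  | 1%nat => - A * c 1%nat ^ 2 + s 1%nat - rk Rs gamma 1 * c 1%nat
  | 2%nat => A / 2 * c 1%nat ^ 2 + s 2%nat - rk Rs gamma 2 * c 2%nat
  | _ => s k - rk Rs gamma k * c k
  end.

Definition Q1 (A Rs gamma : R) (s : nat -> R) : R :=
  / 2 * sqrt (rk Rs gamma 1 ^ 2 / A ^ 2 + 4 * s 1%nat / A) - rk Rs gamma 1 / (2 * A).

Definition Q (A Rs gamma : R) (s : nat -> R) (k : nat) : R :=
  match k with
  | 1%nat => Q1 A Rs gamma s
  | 2%nat => A / (2 * rk Rs gamma 2) * Q1 A Rs gamma s ^ 2 + s 2%nat / rk Rs gamma 2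
  | _ => s k / rk Rs gamma k
  end.

Definition alpha (A Rs gamma : R) (s : nat -> R) : R :=
  / sqrt (rk Rs gamma 1 ^ 2 / A ^ 2 + 4 * s 1%nat / A).

Definition kappa (A Rs gamma : R) (s : nat -> R) : R :=
  Rmin (A / (2 * alpha A Rs gamma s))
       (Rmin (rk Rs gamma 2 / 2) (Rpower 3 gamma / 2 * Rs)).

Definition Cmu (mu : R) : R :=
  Rpower 2 (Rmax (mu - 2) 0) * Rmax mu (mu * (mu - 1)).

Definition is_solution (A Rs gamma : R) (s cin : nat -> R) (c : nat -> R -> R) : Prop :=
  (forall k, (1 <= k)%nat -> c k 0 = cin k) /\
  (forall k t, (1 <= k)%nat -> 0 <= t -> 0 <= c k t) /\
  (forall k t, (1 <= k)%nat -> 0 < t ->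
      derivable_pt_lim (c k) t (rhs A Rs gamma s (fun j => c j t) k)) /\
  (forall k eps, (1 <= k)%nat -> 0 < eps ->
      exists delta, 0 < delta /\
        forall t, 0 <= t < delta -> Rabs (c k t - c k 0) < eps).

(* Main.v *)
Require Import Defs.
From Stdlib Require Import Reals Lra Psatz.
Open Scope R_scope.

Lemma dpl_ext f g x l : (forall y, f y = g y) -> derivable_pt_lim g x l -> derivable_pt_lim f x l.
Proof. intros E H eps He. destruct (H eps He) as [d Hd]. exists d. intros h h0 hd.
rewrite !E. apply Hd; auto. Qed.

Lemma dpl_val f x l l' : l = l' -> derivable_pt_lim f x l -> derivable_pt_lim f x l'.
Proof. intros ->; auto. Qed.

Lemma dpl_mult f g x a b : derivable_pt_lim f x a -> derivable_pt_lim g x b ->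
  derivable_pt_lim (fun y => f y * g y) x (a * g x + f x * b).
Proof. intros H1 H2. exact (derivable_pt_lim_mult f g x a b H1 H2). Qed.

Lemma dpl_plus f g x a b : derivable_pt_lim f x a -> derivable_pt_lim g x b ->
  derivable_pt_lim (fun y => f y + g y) x (a + b).
Proof. intros H1 H2. exact (derivable_pt_lim_plus f g x a b H1 H2). Qed.

Lemma dpl_minus f g x a b : derivable_pt_lim f x a -> derivable_pt_lim g x b ->
  derivable_pt_lim (fun y => f y - g y) x (a - b).
Proof. intros H1 H2. exact (derivable_pt_lim_minus f g x a b H1 H2). Qed.

Lemma dpl_const c x : derivable_pt_lim (fun _ => c) x 0.
Proof. exact (derivable_pt_lim_const c x). Qed.

Lemma dpl_expl a x : derivable_pt_lim (fun y => exp (a*y)) x (a * exp (a*x)).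
Proof.
  apply (dpl_ext _ (comp exp (fun y => a * y))). { intros; reflexivity. }
  apply (dpl_val _ _ (exp (a*x) * a)). ring.
  apply derivable_pt_lim_comp.
  - apply (dpl_ext _ (fun y => (fun _ => a) y * (fun y => y) y)). reflexivity.
    apply (dpl_val _ _ (0 * x + a * 1)). ring.
    apply dpl_mult. apply dpl_const. apply derivable_pt_lim_id.
  - apply derivable_pt_lim_exp.
Qed.

Definition RC (f : R -> R) := forall eps, 0 < eps -> exists d, 0 < d /\
  forall t, 0 <= t < d -> Rabs (f t - f 0) < eps.

Lemma RC_hat f : RC f -> continuity_pt (fun t => f (Rmax t 0)) 0.
Proof.
  intros H eps He. destruct (H eps He) as [d [Hd Hf]]. exists d. split; auto.
  intros x [_ Hx]. simpl in *. unfold R_dist in *.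
  replace (Rmax 0 0) with 0 by (unfold Rmax; destruct Rle_dec; lra).
  apply Hf. split. apply Rmax_r. unfold Rmax. destruct Rle_dec.
  lra. apply Rabs_def2 in Hx. lra.
Qed.

Lemma hat_RC f : continuity_pt (fun t => f (Rmax t 0)) 0 -> RC f.
Proof.
  intros H eps He. destruct (H eps He) as [d [Hd Hf]]. exists d. split; auto.
  intros t [Ht1 Ht2]. simpl in *. unfold R_dist in *.
  specialize (Hf t). 
  replace (Rmax 0 0) with 0 in Hf by (unfold Rmax; destruct Rle_dec; lra).
  replace (Rmax t 0) with t in Hf by (unfold Rmax; destruct Rle_dec; lra).
  destruct (Req_dec t 0) as [->|Hn]. rewrite Rminus_diag, Rabs_R0; lra.
  apply Hf. split. split; [exact I|auto]. apply Rabs_def1; lra.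
Qed.

Lemma RC_cont f : continuity_pt f 0 -> RC f.
Proof.
  intros H eps He. destruct (H eps He) as [d [Hd Hf]]. exists d. split; auto.
  intros t [Ht1 Ht2]. destruct (Req_dec t 0) as [->|Hn]. rewrite Rminus_diag, Rabs_R0; lra.
  apply (Hf t). split. split; [exact I|auto].
  simpl. unfold R_dist. apply Rabs_def1; lra.
Qed.

Lemma RC_mult f g : RC f -> RC g -> RC (fun t => f t * g t).
Proof. intros H1 H2. apply hat_RC.
  exact (continuity_pt_mult _ _ _ (RC_hat f H1) (RC_hat g H2)). Qed.
Lemma RC_plus f g : RC f -> RC g -> RC (fun t => f t + g t).
Proof. intros H1 H2. apply hat_RC.
  exact (continuity_pt_plus _ _ _ (RC_hat f H1) (RC_hat g H2)). Qed.
Lemma RC_minus f g : RC f -> RC g -> RC (fun t => f t - g t).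
Proof. intros H1 H2. apply hat_RC.
  exact (continuity_pt_minus _ _ _ (RC_hat f H1) (RC_hat g H2)). Qed.
Lemma RC_const c : RC (fun _ => c).
Proof. apply RC_cont. apply continuity_pt_const. intros x y; auto. Qed.
Lemma RC_expl a : RC (fun t => exp (a*t)).
Proof. apply RC_cont. apply derivable_continuous_pt.
  exists (a * exp (a*0)). apply dpl_expl. Qed.

Lemma noninc f f' : RC f -> (forall s, 0 < s -> derivable_pt_lim f s (f' s)) ->
  (forall s, 0 < s -> f' s <= 0) -> forall t, 0 <= t -> f t <= f 0.
Proof.
  intros Hc Hd Hn t Ht. destruct (Rle_or_lt (f t) (f 0)) as [h|h]; auto.
  exfalso. destruct (Req_dec t 0) as [->|Htn]. lra.
  destruct (Hc (f t - f 0)) as [d [Hd0 Hf]]. lra.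
  set (e := Rmin (d/2) (t/2)).
  assert (He : 0 < e /\ e < d /\ e < t). { unfold e. split. apply Rmin_glb_lt; lra.
    split. apply Rle_lt_trans with (d/2). apply Rmin_l. lra.
    apply Rle_lt_trans with (t/2). apply Rmin_r. lra. }
  specialize (Hf e ltac:(lra)). apply Rabs_def2 in Hf.
  destruct (MVT_cor2 f f' e t ltac:(lra)) as [c [Hm1 Hm2]].
  { intros c Hc0. apply Hd. lra. }
  specialize (Hn c ltac:(lra)). nra.
Qed.

Lemma npow1 x : npow 1 x = 1.
Proof. unfold npow, Rpower. simpl. rewrite ln_1, Rmult_0_r, exp_0. reflexivity. Qed.

Lemma INR_pos k : (1 <= k)%nat -> 0 < INR k.
Proof. intros. apply lt_0_INR. lia. Qed.

Lemma npow_pos k x : 0 < npow k x.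
Proof. unfold npow, Rpower. apply exp_pos. Qed.

Lemma ln_nonneg k : (1 <= k)%nat -> 0 <= ln (INR k).
Proof. intros. rewrite <- ln_1. destruct (Req_dec (INR k) 1) as [E|E]. rewrite E; lra.
  left. apply ln_increasing. lra. apply le_INR in H. simpl in H. lra. Qed.

Lemma npow_ge1 k x : (1 <= k)%nat -> 0 <= x -> 1 <= npow k x.
Proof. intros. unfold npow, Rpower. rewrite <- exp_0.
  destruct (Req_dec (x * ln (INR k)) 0) as [E|E]. rewrite E; lra.
  left. apply exp_increasing. pose proof (ln_nonneg k H). nra. Qed.

Lemma rk1 Rs g : rk Rs g 1 = Rs.
Proof. unfold rk. rewrite npow1. ring. Qed.

Lemma rk_pos Rs g k : 0 < Rs -> 0 < rk Rs g k.
Proof. intros. unfold rk. pose proof (npow_pos k g). nra. Qed.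

Set Default Proof Using "All".
Section Q1facts.
Variables (A Rs gamma : R) (s : nat -> R).
Hypotheses (hA : 0 < A) (hR : 0 < Rs) (hs1 : 0 <= s 1%nat).
Let S := rk Rs gamma 1 ^ 2 / A ^ 2 + 4 * s 1%nat / A.

Lemma S_pos : 0 < S.
Proof. unfold S. rewrite rk1. assert (0 <= 4 * s 1%nat / A).
  { apply Rmult_le_pos. lra. left; apply Rinv_0_lt_compat; lra. }
  assert (0 < Rs ^ 2 / A ^ 2). { apply Rdiv_lt_0_compat; apply pow_lt; lra. } lra. Qed.

Lemma sqrtS_sq : sqrt S * sqrt S = S.
Proof. apply sqrt_sqrt. left; apply S_pos. Qed.

Lemma Q1_eq : Q1 A Rs gamma s = / 2 * sqrt S - Rs / (2 * A).
Proof. unfold Q1, S. rewrite rk1. reflexivity. Qed.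

Lemma AS_eq : (A * sqrt S) * (A * sqrt S) = Rs^2 + 4 * A * s 1%nat.
Proof. replace ((A * sqrt S) * (A * sqrt S)) with (A*A * (sqrt S * sqrt S)) by ring.
  rewrite sqrtS_sq. unfold S. rewrite rk1. field. lra. Qed.

Lemma AS_pos : 0 < A * sqrt S.
Proof. pose proof (sqrt_lt_R0 _ S_pos). nra. Qed.

Lemma AS_ge : Rs <= A * sqrt S.
Proof. pose proof AS_eq. pose proof AS_pos. nra. Qed.

Lemma Q1_AS : A * Q1 A Rs gamma s = (A * sqrt S - Rs) / 2.
Proof. rewrite Q1_eq. field. lra. Qed.

Lemma Q1_nonneg : 0 <= Q1 A Rs gamma s.
Proof. pose proof Q1_AS. pose proof AS_ge. nra. Qed.

Lemma Q1_root : A * Q1 A Rs gamma s ^ 2 + Rs * Q1 A Rs gamma s = s 1%nat.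
Proof. pose proof Q1_AS as H. pose proof AS_eq.
  set (q := Q1 A Rs gamma s) in *. set (w := A * sqrt S) in *.
  assert (A * (A * q^2 + Rs * q) = A * s 1%nat). { replace (A * (A * q^2 + Rs*q)) with ((A*q)*(A*q) + Rs * (A*q)) by ring.
   rewrite H. nra. } nra. Qed.

Lemma alpha_eq : A / (2 * alpha A Rs gamma s) = A * sqrt S / 2.
Proof. unfold alpha. fold S. pose proof (sqrt_lt_R0 _ S_pos). field. lra. Qed.

End Q1facts.
Lemma Rdiv_le_0_compat' a b : 0 <= a -> 0 < b -> 0 <= a / b.
Proof. intros. unfold Rdiv. apply Rmult_le_pos. auto. left; apply Rinv_0_lt_compat; auto. Qed.

Lemma part1 (A Rs gamma : R) (s : nat -> R)
  (hA : 0 < A) (hR : 0 < Rs) 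
  (hs_nonneg : forall k, (1 <= k)%nat -> 0 <= s k) :
  ((forall k, (1 <= k)%nat -> 0 <= Q A Rs gamma s k) /\
   (forall k, (1 <= k)%nat -> rhs A Rs gamma s (Q A Rs gamma s) k = 0) /\
   (forall q : nat -> R,
      (forall k, (1 <= k)%nat -> 0 <= q k) ->
      (forall k, (1 <= k)%nat -> rhs A Rs gamma s q k = 0) ->
      forall k, (1 <= k)%nat -> q k = Q A Rs gamma s k)).
Proof.
  assert (hs1 : 0 <= s 1%nat) by (apply hs_nonneg; lia).
  pose proof (Q1_nonneg A Rs gamma s hA hR hs1) as HQ0.
  pose proof (Q1_root A Rs gamma s hA hR hs1) as HQr.
  pose proof (rk_pos Rs gamma 2 hR) as Hr2.
  pose proof (rk1 Rs gamma) as Hr1.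
  split; [|split].
  - intros [|[|[|k]]] Hk; try lia; simpl.
    + exact HQ0.
    + assert (0 <= s 2%nat) by (apply hs_nonneg; lia).
      apply Rplus_le_le_0_compat. apply Rmult_le_pos. apply Rmult_le_pos. lra.
      left; apply Rinv_0_lt_compat; lra. nra.
      apply Rmult_le_pos. auto. left; apply Rinv_0_lt_compat; lra.
    + pose proof (rk_pos Rs gamma (S (S (S k))) hR).
      apply Rmult_le_pos. apply hs_nonneg; lia. left; apply Rinv_0_lt_compat; lra.
  - intros [|[|[|k]]] Hk; try lia; simpl.
    + rewrite Hr1. nra.
    + field. lra.
    + pose proof (rk_pos Rs gamma (S (S (S k))) hR). field. lra.
  - intros q Hq Hrhs.
    assert (E1 : q 1%nat = Q1 A Rs gamma s).
    { specialize (Hrhs 1%nat ltac:(lia)). simpl in Hrhs. rewrite Hr1 in Hrhs.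
      specialize (Hq 1%nat ltac:(lia)).
      set (x := q 1%nat) in *. set (y := Q1 A Rs gamma s) in *.
      assert ((x - y) * (A * (x + y) + Rs) = 0) by nra.
      apply Rmult_integral in H. destruct H. lra. nra. }
    intros [|[|[|k]]] Hk; try lia.
    + exact E1.
    + specialize (Hrhs 2%nat ltac:(lia)). simpl in Hrhs |- *. rewrite E1 in Hrhs.
      field_simplify_eq; [|lra]. lra.
    + specialize (Hrhs (S (S (S k))) ltac:(lia)). simpl in Hrhs |- *.
      pose proof (rk_pos Rs gamma (S (S (S k))) hR).
      field_simplify_eq; [|lra]. lra.
Qed.

Lemma psum_nonneg f N : (forall k, (1 <= k)%nat -> 0 <= f k) -> 0 <= psum f N.
Proof. intros H. induction N; simpl. lra. pose proof (H (S N) ltac:(lia)). lra. Qed.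

Lemma psum_growing f : (forall k, (1 <= k)%nat -> 0 <= f k) -> Un_growing (psum f).
Proof. intros H n. simpl. pose proof (H (S n) ltac:(lia)). lra. Qed.

Lemma series_ge f l N : (forall k, (1 <= k)%nat -> 0 <= f k) -> series_to f l -> psum f N <= l.
Proof. intros H Hl. apply growing_ineq; auto. apply psum_growing; auto. Qed.

Lemma Cmu_nonneg mu : 1 <= mu -> 0 <= Cmu mu.
Proof. intros. unfold Cmu. apply Rmult_le_pos. unfold Rpower. left; apply exp_pos.
  apply Rle_trans with mu. lra. apply Rmax_l. Qed.

Lemma part3 (A Rs gamma : R) (s : nat -> R)
  (hA : 0 < A) (hR : 0 < Rs) 
  (hs_nonneg : forall k, (1 <= k)%nat -> 0 <= s k) :
  (A * s 1%nat >= 4 * Rs ^ 2 ->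
   forall mu beta, 1 <= mu -> 0 <= beta <= 1 ->
   forall c : nat -> R, (forall k, (1 <= k)%nat -> 0 <= c k) ->
   forall l, series_to (fun k => npow k (mu + beta) * (c k + Q A Rs gamma s k)) l ->
   2 * A * (Cmu mu + 2) * l - Rs >= (3 * (Cmu mu + 2) - 1) * Rs /\
   (3 * (Cmu mu + 2) - 1) * Rs > 0).
Proof.
  intros Hs mu beta Hmu Hb c Hc l Hl.
  pose proof (Cmu_nonneg mu Hmu).
  assert (hs1 : 0 <= s 1%nat) by (apply hs_nonneg; lia).
  pose proof (part1 A Rs gamma s hA hR hs_nonneg) as [HQ _].
  assert (Hl1 : psum (fun k => npow k (mu + beta) * (c k + Q A Rs gamma s k)) 1 <= l).
  { apply series_ge; auto. intros k Hk. apply Rmult_le_pos. left; apply npow_pos.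
    pose proof (Hc k Hk). pose proof (HQ k Hk). lra. }
  simpl in Hl1. rewrite npow1 in Hl1.
  pose proof (Q1_AS A Rs gamma s hA hR hs1) as HAS.
  pose proof (AS_eq A Rs gamma s hA hR hs1) as HE.
  pose proof (AS_pos A Rs gamma s hA hR hs1) as HP.
  set (w := A * sqrt _) in *.
  assert (w >= 4 * Rs) by nra.
  assert (0 <= c 1%nat) by (apply Hc; lia).
  split; [|nra].
  assert (2 * A * l >= 3 * Rs) by nra. nra.
Qed.
Set Default Proof Using "All".

Section Sol.
Variables (A Rs gamma : R) (s cin : nat -> R) (c : nat -> R -> R).
Hypotheses (hA : 0 < A) (hR : 0 < Rs) (hg : 0 < gamma)
  (hs_nonneg : forall k, (1 <= k)%nat -> 0 <= s k)
  (hsol : is_solution A Rs gamma s cin c).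

Let q := Q A Rs gamma s.
Let kap := kappa A Rs gamma s.
Let w := A * sqrt (rk Rs gamma 1 ^ 2 / A ^ 2 + 4 * s 1%nat / A).

Lemma hs1 : 0 <= s 1%nat. Proof. apply hs_nonneg; lia. Qed.

Lemma kap_facts : 0 < kap /\ kap <= w / 2 /\ kap <= rk Rs gamma 2 / 2 /\
   kap <= Rpower 3 gamma / 2 * Rs.
Proof.
  pose proof (alpha_eq A Rs gamma s hA hR hs1) as Ha.
  pose proof (AS_pos A Rs gamma s hA hR hs1).
  pose proof (rk_pos Rs gamma 2 hR).
  assert (0 < Rpower 3 gamma) by (unfold Rpower; apply exp_pos).
  unfold kap, kappa. rewrite Ha. fold w.
  split. apply Rmin_glb_lt. unfold w in *; lra. apply Rmin_glb_lt. lra. nra.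
  split. apply Rmin_l. split. eapply Rle_trans. apply Rmin_r. apply Rmin_l.
  eapply Rle_trans. apply Rmin_r. apply Rmin_r.
Qed.

Lemma RCc k : (1 <= k)%nat -> RC (c k).
Proof. destruct hsol as [_ [_ [_ H]]]. intros Hk eps He. apply H; auto. Qed.

Lemma c0 k : (1 <= k)%nat -> c k 0 = cin k.
Proof. destruct hsol as [H _]. apply H. Qed.

Lemma cnn k t : (1 <= k)%nat -> 0 <= t -> 0 <= c k t.
Proof. destruct hsol as [_ [H _]]. apply H. Qed.

Lemma Hder1 t : 0 < t -> derivable_pt_lim (c 1%nat) t (-A * c 1%nat t ^ 2 + s 1%nat - Rs * c 1%nat t).
Proof. intros Ht. destruct hsol as [_ [_ [HH _]]]. rewrite <- (rk1 Rs gamma). exact (HH 1%nat t ltac:(lia) Ht). Qed.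

Lemma Hder2 t : 0 < t -> derivable_pt_lim (c 2%nat) t (A / 2 * c 1%nat t ^ 2 + s 2%nat - rk Rs gamma 2 * c 2%nat t).
Proof. intros Ht. destruct hsol as [_ [_ [HH _]]]. exact (HH 2%nat t ltac:(lia) Ht). Qed.

Lemma Hder3 k t : (3 <= k)%nat -> 0 < t -> derivable_pt_lim (c k) t (s k - rk Rs gamma k * c k t).
Proof. intros Hk Ht. destruct hsol as [_ [_ [HH _]]]. pose proof (HH k t ltac:(lia) Ht) as H2.
  destruct k as [|[|[|k]]]; try lia. exact H2. Qed.

Lemma sol_k3 k t : (3 <= k)%nat -> 0 <= t ->
  c k t - q k = (cin k - q k) * exp (- rk Rs gamma k * t).
Proof.
  intros Hk Ht. set (r := rk Rs gamma k).
  assert (Hr : 0 < r) by (apply rk_pos; auto).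
  assert (Hq : r * q k = s k).
  { unfold q. destruct k as [|[|[|k]]]; try lia. simpl. unfold r in *. field. lra. }
  set (g := fun t => (c k t - q k) * exp (r * t)).
  assert (RCg : RC g). { unfold g. apply RC_mult. apply RC_minus. apply RCc; lia. apply RC_const. apply RC_expl. }
  assert (Dg : forall t, 0 < t -> derivable_pt_lim g t 0).
  { intros t0 Ht0. unfold g. eapply dpl_val; [|apply dpl_mult; [apply dpl_minus; [apply Hder3; auto|apply dpl_const]|apply dpl_expl]].
    fold r. nra. }
  assert (Dg' : forall t, 0 < t -> derivable_pt_lim (fun t => - g t) t 0).
  { intros t0 Ht0. apply (dpl_ext _ (fun t => (fun _ => 0) t - g t)). intros; ring.
    eapply dpl_val; [|apply dpl_minus; [apply dpl_const|apply Dg; auto]]. ring. }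
  pose proof (noninc g (fun _ => 0) RCg Dg ltac:(intros; lra) t Ht).
  pose proof (noninc (fun t => - g t) (fun _ => 0)) as H2.
  assert (RC (fun t => - g t)). { apply (hat_RC). 
    exact (continuity_pt_opp _ _ (RC_hat g RCg)). }
  specialize (H2 H0 Dg' ltac:(intros; lra) t Ht).
  assert (g t = g 0) by lra. unfold g in H1.
  rewrite Rmult_0_r, exp_0, Rmult_1_r, c0 in H1 by lia.
  rewrite <- H1. rewrite Rmult_assoc, <- exp_plus. replace (r * t + - r * t) with 0 by ring.
  rewrite exp_0. ring.
Qed.


Lemma Q1nn : 0 <= q 1%nat.
Proof. apply (Q1_nonneg A Rs gamma s hA hR hs1). Qed.

Lemma sol_k1 t : 0 <= t ->
  Rabs (c 1%nat t - q 1%nat) * exp (kap * t) <= Rabs (cin 1%nat - q 1%nat).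
Proof.
  intros Ht.
  pose proof kap_facts as [Hk1 [Hk2 _]].
  pose proof (Q1_AS A Rs gamma s hA hR hs1) as HAS. fold w in HAS.
  pose proof (Q1_root A Rs gamma s hA hR hs1) as Hroot.
  assert (Hq1 : q 1%nat = Q1 A Rs gamma s) by reflexivity.
  pose proof Q1nn as HQ.
  set (QQ := q 1%nat) in *. rewrite <- Hq1 in HAS, Hroot.
  set (phi := fun t => (c 1%nat t - QQ) * (c 1%nat t - QQ) * exp ((2*kap) * t)).
  assert (RCp : RC phi). { unfold phi. apply RC_mult. apply RC_mult; apply RC_minus;
    try apply RC_const; apply RCc; lia. apply RC_expl. }
  assert (Dp : forall t, 0 < t -> derivable_pt_lim phi t
     (2 * (c 1%nat t - QQ) * (c 1%nat t - QQ) * exp (2*kap*t) * (kap - A * (c 1%nat t + QQ) - Rs))).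
  { intros t0 Ht0. unfold phi. eapply dpl_val; [|apply dpl_mult; [apply dpl_mult; apply dpl_minus; try apply dpl_const; apply Hder1; auto|apply dpl_expl]].
    assert (s 1%nat = A * QQ^2 + Rs * QQ) by lra. rewrite H. ring. }
  assert (Hneg : forall t, 0 < t -> 2 * (c 1%nat t - QQ) * (c 1%nat t - QQ) * exp (2*kap*t) * (kap - A * (c 1%nat t + QQ) - Rs) <= 0).
  { intros t0 Ht0. pose proof (exp_pos (2*kap*t0)). pose proof (cnn 1 t0 ltac:(lia) ltac:(lra)).
    assert (kap - A * (c 1%nat t0 + QQ) - Rs <= 0) by nra.
    assert (0 <= 2 * (c 1%nat t0 - QQ) * (c 1%nat t0 - QQ) * exp (2*kap*t0)).
    { apply Rmult_le_pos; [|lra]. pose proof (Rle_0_sqr (c 1%nat t0 - QQ)); unfold Rsqr in *; nra. } nra. }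
  pose proof (noninc phi _ RCp Dp Hneg t Ht) as H. unfold phi in H.
  rewrite Rmult_0_r, exp_0, Rmult_1_r, c0 in H by lia.
  replace (2 * kap * t) with (kap * t + kap * t) in H by ring. rewrite exp_plus in H.
  set (X := exp (kap * t)) in *. assert (0 < X) by apply exp_pos.
  set (d := c 1%nat t - QQ) in *. set (d0 := cin 1%nat - QQ) in *.
  assert ((Rabs d * X) * (Rabs d * X) <= Rabs d0 * Rabs d0).
  { pose proof (Rsqr_abs d) as E1. pose proof (Rsqr_abs d0) as E2. unfold Rsqr in E1, E2.
    replace (Rabs d * X * (Rabs d * X)) with ((Rabs d * Rabs d) * (X * X)) by ring.
    rewrite <- E1, <- E2. exact H. }
  pose proof (Rabs_pos d0). pose proof (Rabs_pos d). nra.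
Qed.

Let D := Rabs (cin 1%nat - q 1%nat).
Let M := A / 2 * D * (D + 2 * q 1%nat).
Let E2 := Rabs (cin 2%nat - q 2%nat) + M / (rk Rs gamma 2 - kap).

Lemma sol_k2 t : 0 <= t ->
  Rabs (c 2%nat t - q 2%nat) * exp (kap * t) <= E2.
Proof.
  intros Ht.
  pose proof kap_facts as [Hk1 [_ [Hk3 _]]].
  set (r2 := rk Rs gamma 2) in *.
  assert (Hr2 : 0 < r2) by (apply rk_pos; auto).
  assert (Hrk : 0 < r2 - kap) by lra.
  pose proof Q1nn as HQ.
  assert (HQ2 : r2 * q 2%nat = A / 2 * q 1%nat ^ 2 + s 2%nat).
  { unfold q. simpl. fold r2. field. lra. }
  assert (HD : 0 <= D) by apply Rabs_pos.
  assert (HM : 0 <= M) by (unfold M; apply Rmult_le_pos; [apply Rmult_le_pos|]; lra).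
  assert (Hf : forall t, 0 <= t -> A / 2 * Rabs (c 1%nat t ^ 2 - q 1%nat ^ 2) * exp (kap * t) <= M).
  { intros t0 Ht0. pose proof (sol_k1 t0 Ht0) as H1. fold D in H1.
    pose proof (exp_pos (kap * t0)). 
    assert (1 <= exp (kap * t0)). { rewrite <- exp_0. destruct (Req_dec t0 0). subst. rewrite Rmult_0_r. lra.
      left; apply exp_increasing; nra. }
    replace (c 1%nat t0 ^ 2 - q 1%nat ^ 2) with ((c 1%nat t0 - q 1%nat) * ((c 1%nat t0 - q 1%nat) + 2 * q 1%nat)) by ring.
    rewrite Rabs_mult.
    set (d := c 1%nat t0 - q 1%nat) in *. set (X := exp (kap * t0)) in *.
    assert (Rabs (d + 2 * q 1%nat) <= Rabs d + 2 * q 1%nat).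
    { eapply Rle_trans. apply Rabs_triang. rewrite (Rabs_right (2 * q 1%nat)) by lra. lra. }
    assert (Rabs d <= D) by (pose proof (Rabs_pos d); nra).
    pose proof (Rabs_pos d). pose proof (Rabs_pos (d + 2 * q 1%nat)).
    unfold M. 
    assert (Rabs d * X * Rabs (d + 2 * q 1%nat) <= D * (D + 2 * q 1%nat)).
    { apply Rle_trans with (D * (Rabs d + 2 * q 1%nat)). 
      apply Rmult_le_compat; try nra. apply Rmult_le_compat_l; lra. }
    nra. }
  assert (Hgen : forall sg : R, sg * sg = 1 ->
     sg * (c 2%nat t - q 2%nat) * exp (kap * t) <= E2).
  { intros sg Hsg.
    set (psi := fun t => sg * ((c 2%nat t - q 2%nat) * exp (r2 * t)) - M / (r2 - kap) * exp ((r2 - kap) * t)).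
    assert (RCp : RC psi). { unfold psi. apply RC_minus; apply RC_mult; try apply RC_const.
      apply RC_mult. apply RC_minus. apply RCc; lia. apply RC_const. apply RC_expl. apply RC_expl. }
    assert (Dp : forall t, 0 < t -> derivable_pt_lim psi t
      (sg * (A / 2 * (c 1%nat t ^ 2 - q 1%nat ^ 2) * exp (r2 * t)) - M * exp ((r2 - kap) * t))).
    { intros t0 Ht0. unfold psi. eapply dpl_val; [|apply dpl_minus; apply dpl_mult; [apply dpl_const| apply dpl_mult; [apply dpl_minus; [apply Hder2; auto|apply dpl_const]|apply dpl_expl] |apply dpl_const|apply dpl_expl]].
      fold r2. cbv beta. assert (EM : M / (r2 - kap) * (r2 - kap) = M) by (field; lra).
      replace (M / (r2 - kap) * ((r2 - kap) * exp ((r2 - kap) * t0))) with (M / (r2 - kap) * (r2 - kap) * exp ((r2 - kap) * t0)) by ring.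
      rewrite EM. replace (s 2%nat) with (r2 * q 2%nat - A / 2 * q 1%nat ^ 2) by lra. ring. }
    assert (Hneg : forall t, 0 < t -> sg * (A / 2 * (c 1%nat t ^ 2 - q 1%nat ^ 2) * exp (r2 * t)) - M * exp ((r2 - kap) * t) <= 0).
    { intros t0 Ht0. specialize (Hf t0 ltac:(lra)).
      replace (r2 * t0) with ((r2 - kap) * t0 + kap * t0) by ring. rewrite exp_plus.
      set (Z := exp ((r2 - kap) * t0)). set (X := exp (kap * t0)) in *.
      assert (0 < Z) by apply exp_pos. assert (0 < X) by apply exp_pos.
      set (u := c 1%nat t0 ^ 2 - q 1%nat ^ 2) in *.
      assert (sg * u <= Rabs u). { assert (sg = 1 \/ sg = -1) as [->| ->] by nra.
        rewrite Rmult_1_l; apply Rle_abs. rewrite <- Rabs_Ropp. replace (-1 * u) with (- u) by ring. apply Rle_abs. }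
      assert (Eq : sg * (A / 2 * u * (Z * X)) = Z * (A/2 * X * (sg * u))) by ring. rewrite Eq.
      assert (A / 2 * X * (sg * u) <= M). { apply Rle_trans with (A/2*X*Rabs u). apply Rmult_le_compat_l; [|lra]. apply Rmult_le_pos; lra. replace (A/2*X*Rabs u) with (A/2*Rabs u*X) by ring. exact Hf. } nra. }
    pose proof (noninc psi _ RCp Dp Hneg t Ht) as H. unfold psi in H.
    rewrite !Rmult_0_r, exp_0, Rmult_1_r, c0 in H by lia.
    replace (r2 * t) with ((r2 - kap) * t + kap * t) in H by ring. rewrite exp_plus in H.
    set (Z := exp ((r2 - kap) * t)) in *. set (X := exp (kap * t)) in *.
    assert (0 < X) by apply exp_pos.
    assert (1 <= Z). { unfold Z. rewrite <- exp_0. destruct (Req_dec t 0). subst. rewrite Rmult_0_r. lra.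
      left; apply exp_increasing; nra. }
    assert (sg * (cin 2%nat - q 2%nat) <= Rabs (cin 2%nat - q 2%nat)).
    { assert (sg = 1 \/ sg = -1) as [->| ->] by nra.
        rewrite Rmult_1_l; apply Rle_abs. rewrite <- Rabs_Ropp. replace (-1 * _) with (- (cin 2%nat - q 2%nat)) by ring. apply Rle_abs. }
    set (e := c 2%nat t - q 2%nat) in *.
    assert (Hmz : 0 <= M / (r2 - kap)) by (unfold Rdiv; apply Rmult_le_pos; [lra|left; apply Rinv_0_lt_compat; lra]).
    unfold E2. fold r2.
    assert (Z * (sg * e * X) <= Z * (Rabs (cin 2%nat - q 2%nat) + M / (r2 - kap))).
    { replace (Z * (sg * e * X)) with (sg * (e * (Z * X))) by ring. pose proof (Rabs_pos (cin 2%nat - q 2%nat)). assert (0 <= (Z - 1) * Rabs (cin 2%nat - q 2%nat)) by (apply Rmult_le_pos; lra). lra. }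
    nra. }
  pose proof (Hgen 1 ltac:(ring)). pose proof (Hgen (-1) ltac:(ring)).
  destruct (Rcase_abs (c 2%nat t - q 2%nat)).
  rewrite Rabs_left by auto. lra. rewrite Rabs_right by auto. lra.
Qed.

End Sol.

Lemma exp_mono x y : x <= y -> exp x <= exp y.
Proof. intros [H|H]. left; apply exp_increasing; auto. subst; lra. Qed.

Lemma exp_sq x : 0 <= x -> x ^ 2 / 4 <= exp x.
Proof. intros Hx. replace x with (x/2 + x/2) at 2 by field. rewrite exp_plus.
  assert (x/2 <= exp (x/2)). { destruct (Req_dec (x/2) 0) as [E|E]. rewrite E, exp_0; lra.
    pose proof (exp_ineq1 (x/2) E). lra. }
  assert (0 <= x/2) by lra. nra. Qed.

Lemma cv_le U l M : Un_cv U l -> (forall n, U n <= M) -> l <= M.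
Proof. intros H HM. destruct (Rle_or_lt l M); auto. exfalso.
  destruct (H (l - M)) as [N HN]. lra. specialize (HN N (le_n N)). specialize (HM N).
  unfold Rdist in HN. apply Rabs_def2 in HN. lra. Qed.

Lemma Bbound Rs gamma mu k : 0 < Rs -> 0 < gamma -> (1 <= k)%nat ->
  npow k mu * exp (- rk Rs gamma k / 2) <=
  exp ((mu - 1)^2 / (4 * (Rs * gamma^2 / 8))) * INR k.
Proof.
  intros hR hg hk. set (b := Rs * gamma^2 / 8). assert (hb : 0 < b) by (unfold b; apply Rdiv_lt_0_compat; [apply Rmult_lt_0_compat; [lra|apply pow_lt; lra]|lra]).
  set (u := ln (INR k)). assert (hu : 0 <= u) by (apply ln_nonneg; auto).
  assert (Ek : INR k = exp u) by (unfold u; rewrite exp_ln; [reflexivity|apply INR_pos; auto]).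
  unfold rk, npow, Rpower. fold u. rewrite Ek. rewrite <- !exp_plus. apply exp_mono.
  pose proof (exp_sq (gamma * u)) as He. specialize (He ltac:(nra)).
  assert (Rs * exp (gamma * u) / 2 >= b * u^2). { unfold b. nra. }
  assert ((mu - 1) * u - b * u^2 <= (mu - 1)^2 / (4 * b)).
  { assert ((mu-1)^2/(4*b) - ((mu - 1) * u - b * u^2) = (mu - 1 - 2*b*u)^2 / (4*b)) by (field; lra).
    assert (0 <= (mu - 1 - 2*b*u)^2 / (4*b)). { apply Rmult_le_pos. apply pow2_ge_0. left; apply Rinv_0_lt_compat; lra. }
    lra. }
  lra.
Qed.

Lemma part2 (A Rs gamma : R) (s : nat -> R)
  (hA : 0 < A) (hR : 0 < Rs) (hg : 0 < gamma)
  (hs_nonneg : forall k, (1 <= k)%nat -> 0 <= s k)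
  (hs_mom : forall mu, 0 <= mu -> exists l, series_to (fun k => npow k mu * s k) l) :
  (forall cin : nat -> R,
     (forall k, (1 <= k)%nat -> 0 <= cin k) ->
     (exists l, series_to (fun k => INR k * cin k) l) ->
     forall mu, 1 <= mu ->
     exists K, forall c : nat -> R -> R,
       is_solution A Rs gamma s cin c ->
       forall t, 1 <= t ->
       exists l, series_to (fun k => npow k mu * Rabs (c k t - Q A Rs gamma s k)) l /\
                 l <= K * exp (- kappa A Rs gamma s * t)).
Proof.
  intros cin Hcin [l0 Hl0] mu Hmu.
  destruct (hs_mom mu ltac:(lra)) as [Lm HLm].
  set (q := Q A Rs gamma s). set (kap := kappa A Rs gamma s).
  set (D := Rabs (cin 1%nat - q 1%nat)).
  set (E2 := Rabs (cin 2%nat - q 2%nat) + A / 2 * D * (D + 2 * q 1%nat) / (rk Rs gamma 2 - kap)).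
  set (B := exp ((mu - 1)^2 / (4 * (Rs * gamma^2 / 8)))).
  set (g := fun k => match k with 1%nat => D | 2%nat => npow 2 mu * E2
                     | _ => B * (INR k * cin k) + npow k mu * s k / Rs end).
  exists (D + npow 2 mu * E2 + B * l0 + Lm / Rs).
  intros c Hsol t Ht.
  pose proof (kap_facts A Rs gamma s cin c hA hR hg hs_nonneg Hsol) as [Hk1 [Hk2 [Hk3 Hk4]]].
  fold kap in Hk1, Hk2, Hk3, Hk4.
  assert (Hr2 : 0 < rk Rs gamma 2) by (apply rk_pos; auto).
  pose proof (Q1_nonneg A Rs gamma s hA hR ltac:(apply hs_nonneg; lia)) as HQ1.
  pose proof (part1 A Rs gamma s hA hR hs_nonneg) as [HQ _]. fold q in HQ.
  assert (HD : 0 <= D) by apply Rabs_pos.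
  assert (HE2 : 0 <= E2).
  { unfold E2. pose proof (Rabs_pos (cin 2%nat - q 2%nat)).
    assert (0 <= A / 2 * D * (D + 2 * q 1%nat) / (rk Rs gamma 2 - kap)).
    { unfold Rdiv. apply Rmult_le_pos. apply Rmult_le_pos. apply Rmult_le_pos. lra. 
      unfold q; simpl; lra. unfold q; simpl; lra. left; apply Rinv_0_lt_compat; lra. }
    lra. }
  assert (HB : 0 < B) by apply exp_pos.
  set (f := fun k => npow k mu * Rabs (c k t - q k)).
  assert (Hf0 : forall k, (1 <= k)%nat -> 0 <= f k).
  { intros k Hk. unfold f. apply Rmult_le_pos. left; apply npow_pos. apply Rabs_pos. }
  set (X := exp (- kap * t)).
  assert (HX : 0 < X) by apply exp_pos.
  assert (HXe : X * exp (kap * t) = 1).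
  { unfold X. rewrite <- exp_plus. replace (- kap * t + kap * t) with 0 by ring. apply exp_0. }
  assert (Hfg : forall k, (1 <= k)%nat -> f k <= X * g k).
  { intros k Hk. unfold f, g. destruct k as [|[|[|k]]]; try lia.
    - rewrite npow1. pose proof (sol_k1 A Rs gamma s cin c hA hR hg hs_nonneg Hsol t ltac:(lra)) as H.
      fold q kap D in H. pose proof (exp_pos (kap * t)).
      pose proof (Rabs_pos (c 1%nat t - q 1%nat)).
      apply Rle_trans with (X * (Rabs (c 1%nat t - q 1%nat) * exp (kap * t))).
      nra. apply Rmult_le_compat_l; lra.
    - pose proof (sol_k2 A Rs gamma s cin c hA hR hg hs_nonneg Hsol t ltac:(lra)) as H.
      fold q kap D in H. fold E2 in H. pose proof (exp_pos (kap * t)).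
      pose proof (Rabs_pos (c 2%nat t - q 2%nat)). pose proof (npow_pos 2 mu).
      replace (X * (npow 2 mu * E2)) with (npow 2 mu * (X * E2)) by ring.
      apply Rmult_le_compat_l. lra.
      apply Rle_trans with (X * (Rabs (c 2%nat t - q 2%nat) * exp (kap * t))).
      nra. apply Rmult_le_compat_l; lra.
    - set (k' := S (S (S k))).
      pose proof (sol_k3 A Rs gamma s cin c hA hR hg hs_nonneg Hsol k' t ltac:(unfold k'; lia) ltac:(lra)) as H.
      fold q in H. rewrite H. rewrite Rabs_mult, (Rabs_right (exp _)) by (left; apply exp_pos).
      set (r := rk Rs gamma k').
      assert (Hr : Rs <= r). { unfold r, rk. pose proof (npow_ge1 k' gamma ltac:(unfold k'; lia) ltac:(lra)). nra. }
      assert (Hr3 : Rpower 3 gamma * Rs <= r).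
      { unfold r, rk, npow. rewrite Rmult_comm. apply Rmult_le_compat_l. lra.
        apply Rle_Rpower_l. lra. split. lra. unfold k'. rewrite !S_INR. pose proof (pos_INR k). lra. }
      assert (Hexp : exp (- r * t) <= X * exp (- r / 2)).
      { unfold X. rewrite <- exp_plus. apply exp_mono. nra. }
      assert (Hqk : q k' = s k' / r) by reflexivity.
      assert (Hs : 0 <= s k') by (apply hs_nonneg; unfold k'; lia).
      assert (Hc : 0 <= cin k') by (apply Hcin; unfold k'; lia).
      assert (Hq0 : 0 <= q k') by (apply HQ; unfold k'; lia).
      assert (Hqs : q k' <= s k' / Rs).
      { rewrite Hqk. unfold Rdiv. apply Rmult_le_compat_l. lra. apply Rinv_le_contravar; lra. }
      assert (Habs : Rabs (cin k' - q k') <= cin k' + q k').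
      { apply Rabs_le. lra. }
      pose proof (Bbound Rs gamma mu k' hR hg ltac:(unfold k'; lia)) as HBb. fold B r in HBb.
      pose proof (npow_pos k' mu) as Hnp.
      pose proof (exp_pos (- r / 2)) as He2.
      assert (He21 : exp (- r / 2) <= 1). { rewrite <- exp_0. apply exp_mono. lra. }
      apply Rle_trans with (npow k' mu * (cin k' + q k') * (X * exp (- r / 2))).
      { rewrite Rmult_assoc. apply Rmult_le_compat_l. lra.
        apply Rmult_le_compat; try lra. apply Rabs_pos. left; apply exp_pos. }
      replace (npow k' mu * (cin k' + q k') * (X * exp (- r / 2))) with
        (X * (cin k' * (npow k' mu * exp (- r / 2)) + npow k' mu * q k' * exp (- r / 2))) by ring.
      apply Rmult_le_compat_l. lra.
      apply Rplus_le_compat.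
      + replace (B * (INR k' * cin k')) with (cin k' * (B * INR k')) by ring.
        apply Rmult_le_compat_l; lra.
      + apply Rle_trans with (npow k' mu * q k'). 
        { pose proof (Rmult_le_pos _ _ (Rlt_le _ _ Hnp) Hq0). nra. }
        unfold Rdiv. rewrite Rmult_assoc. apply Rmult_le_compat_l. lra. exact Hqs. }
  assert (Hpf : forall N, psum f N <= X * psum g N).
  { induction N. simpl. rewrite Rmult_0_r; lra. change (psum f (S N)) with (psum f N + f (S N)). change (psum g (S N)) with (psum g N + g (S N)). pose proof (Hfg (S N) ltac:(lia)). rewrite Rmult_plus_distr_l. lra. }
  assert (Hkc : forall k, (1 <= k)%nat -> 0 <= INR k * cin k).
  { intros k Hk. apply Rmult_le_pos. apply pos_INR. auto. }
  assert (Hms : forall k, (1 <= k)%nat -> 0 <= npow k mu * s k).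
  { intros k Hk. apply Rmult_le_pos. left; apply npow_pos. auto. }
  assert (Hpg : forall N, psum g N <= D + npow 2 mu * E2 + B * psum (fun k => INR k * cin k) N
                          + psum (fun k => npow k mu * s k) N / Rs).
  { pose proof (npow_pos 2 mu).
    induction N.
    - simpl. unfold Rdiv. rewrite Rmult_0_l, Rmult_0_r. nra.
    - destruct N as [|[|N]].
      + simpl. unfold g. pose proof (Hkc 1%nat ltac:(lia)). pose proof (Hms 1%nat ltac:(lia)).
        assert (0 <= (0 + npow 1 mu * s 1%nat) / Rs) by (apply Rdiv_le_0_compat'; lra). simpl INR in *. nra.
      + pose proof (psum_nonneg _ 2 Hkc). pose proof (psum_nonneg _ 2 Hms).
        assert (0 <= psum (fun k => npow k mu * s k) 2 / Rs) by (apply Rdiv_le_0_compat'; lra).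
        simpl psum in *. unfold g. nra.
      + change (psum g (S (S (S N)))) with (psum g (S (S N)) + g (S (S (S N)))).
        change (psum (fun k => INR k * cin k) (S (S (S N)))) with
          (psum (fun k => INR k * cin k) (S (S N)) + INR (S (S (S N))) * cin (S (S (S N)))).
        change (psum (fun k => npow k mu * s k) (S (S (S N)))) with
          (psum (fun k => npow k mu * s k) (S (S N)) + npow (S (S (S N))) mu * s (S (S (S N)))).
        unfold g at 2.
        assert (E : (psum (fun k => npow k mu * s k) (S (S N)) + npow (S (S (S N))) mu * s (S (S (S N)))) / Rs
          = psum (fun k => npow k mu * s k) (S (S N)) / Rs + npow (S (S (S N))) mu * s (S (S (S N))) / Rs) by (field; lra).
        rewrite E. nra. }
  assert (Hbound : forall N, psum f N <= (D + npow 2 mu * E2 + B * l0 + Lm / Rs) * X).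
  { intros N. specialize (Hpf N). specialize (Hpg N).
    pose proof (series_ge _ l0 N Hkc Hl0). pose proof (series_ge _ Lm N Hms HLm).
    assert (psum (fun k => npow k mu * s k) N / Rs <= Lm / Rs).
    { unfold Rdiv. apply Rmult_le_compat_r. left; apply Rinv_0_lt_compat; lra. lra. }
    assert (B * psum (fun k => INR k * cin k) N <= B * l0) by (apply Rmult_le_compat_l; lra).
    assert (psum g N <= D + npow 2 mu * E2 + B * l0 + Lm / Rs) by lra.
    apply Rle_trans with (X * psum g N). exact Hpf. rewrite (Rmult_comm _ X). apply Rmult_le_compat_l; lra. }
  destruct (growing_cv (psum f)) as [l Hl].
  { apply psum_growing; auto. }
  { exists ((D + npow 2 mu * E2 + B * l0 + Lm / Rs) * X). intros x [n ->]. apply Hbound. }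
  exists l. split. exact Hl. apply (cv_le _ _ _ Hl Hbound).
Qed.

Theorem mainTheorem16 (A Rs gamma : R) (s : nat -> R)
  (hA : 0 < A) (hR : 0 < Rs) (hg : 0 < gamma)
  (hs_nonneg : forall k, (1 <= k)%nat -> 0 <= s k)
  (hs_mom : forall mu, 0 <= mu -> exists l, series_to (fun k => npow k mu * s k) l) :
  (* (1) unique nonnegative equilibrium *)
  ((forall k, (1 <= k)%nat -> 0 <= Q A Rs gamma s k) /\
   (forall k, (1 <= k)%nat -> rhs A Rs gamma s (Q A Rs gamma s) k = 0) /\
   (forall q : nat -> R,
      (forall k, (1 <= k)%nat -> 0 <= q k) ->
      (forall k, (1 <= k)%nat -> rhs A Rs gamma s q k = 0) ->
      forall k, (1 <= k)%nat -> q k = Q A Rs gamma s k))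
  /\
  (* (2) exponential convergence of moments *)
  (forall cin : nat -> R,
     (forall k, (1 <= k)%nat -> 0 <= cin k) ->
     (exists l, series_to (fun k => INR k * cin k) l) ->
     forall mu, 1 <= mu ->
     exists K, forall c : nat -> R -> R,
       is_solution A Rs gamma s cin c ->
       forall t, 1 <= t ->
       exists l, series_to (fun k => npow k mu * Rabs (c k t - Q A Rs gamma s k)) l /\
                 l <= K * exp (- kappa A Rs gamma s * t))
  /\
  (* (3) lower bound *)
  (A * s 1%nat >= 4 * Rs ^ 2 ->
   forall mu beta, 1 <= mu -> 0 <= beta <= 1 ->
   forall c : nat -> R, (forall k, (1 <= k)%nat -> 0 <= c k) ->
   forall l, series_to (fun k => npow k (mu + beta) * (c k + Q A Rs gamma s k)) l ->
   2 * A * (Cmu mu + 2) * l - Rs >= (3 * (Cmu mu + 2) - 1) * Rs /\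
   (3 * (Cmu mu + 2) - 1) * Rs > 0).
Proof.
  split; [|split].
  - apply part1; auto.
  - apply part2; auto.
  - apply part3; auto.
Qed.
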